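(* Let $N\ge1$, $k\ge2$, and consider the large-batch model of the round-based $k$IC batch labeling algorithm starting from the uniform class distribution $\pi_i=1/N$, $1\le i\le N$. Then the class distribution of the batch remains uniform in every round $r$, the settling probability in every round is $$P(s\in\mathcal{L}_r)=1-\frac{N}{k}\Big(1-\big(1-\tfrac{1}{N}\big)^k\Big),$$ and the average query rate over round $r$ alone, $R^{kIC}_{2,r}=1/(k\,P(s\in\mathcal{L}_r))$, and over rounds $1,\dots,r$, $R^{kIC}_{2,1:r}$, both equal $$\frac{1}{k-N\big(1-(1-\frac1N)^k\big)}.$$ Moreover this quantity is asymptotically equal to $\frac{2N}{k(k-1)}$ as $N\to\infty$ with $k$ fixed.
   Context: Large-batch model: in each round each $k$IC query consists of $k$ samples with i.i.d. classes drawn from the current batch class distribution $\boldsymbol{\pi}$; an error-free oracle reveals which samples share a class; one representative per class present is returned to the next batch and the others are settled. The settling probability $P(s\in\mathcal{L})$ is the expected number of settled samples per query divided by $k$, and the next batch's class distribution is $\pi'_i=\frac{1-(1-\pi_i)^k}{N-\sum_j(1-\pi_j)^k}$. Batch sizes evolve as $L_{r+1}=L_r(1-p_r)$ with $p_r$ the settling probability in round $r$; round $r$ uses $L_r/k$ queries and settles $L_rp_r$ samples; $R^{kIC}_{2,1:r}$ is total queries over rounds $1,\dots,r$ divided by total settled samples over these rounds. *)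

(* Defs.v *)
From HB Require Import structures.
From mathcomp Require Import all_boot all_order all_algebra.
From mathcomp Require Import all_classical all_reals all_analysis.
Unset Implicit Arguments. Unset Printing Implicit Defensive.
Import Order.TTheory GRing.Theory Num.Theory.
Local Open Scope ring_scope.

Section KIC.
Variable R : realType.

Definition cdist (N : nat) := 'I_N -> R.

Definition unif_dist (N : nat) : cdist N := fun _ => (N%:R)^-1.

Definition query_prob (N k : nat) (pi : cdist N) (c : {ffun 'I_k -> 'I_N}) : R :=
  \prod_(j < k) pi (c j).

(* Number of settled samples in a query: k minus the number of distinct
   classes present (one representative per class is returned). *)
Definition n_settled (N k : nat) (c : {ffun 'I_k -> 'I_N}) : nat :=
  (k - #|[set c j | j in 'I_k]|)%N.

Definition settle_prob (N k : nat) (pi : cdist N) : R :=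
  (\sum_(c : {ffun 'I_k -> 'I_N}) query_prob N k pi c * (n_settled N k c)%:R) / k%:R.

Definition next_dist (N k : nat) (pi : cdist N) : cdist N :=
  fun i => (1 - (1 - pi i) ^+ k) / (N%:R - \sum_(j < N) (1 - pi j) ^+ k).

(* Class distribution in round r (rounds numbered from 1), from the uniform start. *)
Definition round_dist (N k r : nat) : cdist N :=
  iter r.-1 (next_dist N k) (unif_dist N).

Definition round_settle (N k r : nat) : R := settle_prob N k (round_dist N k r).

(* Batch size L_r, with L_1 = L1 and L_{r+1} = L_r (1 - p_r). *)
Definition batch_size (N k : nat) (L1 : R) (r : nat) : R :=
  L1 * \prod_(1 <= s < r) (1 - round_settle N k s).

Definition rate_round (N k r : nat) : R := (k%:R * round_settle N k r)^-1.

(* Query rate over rounds 1..r: total queries / total settled samples. *)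
Definition rate_cum (N k : nat) (L1 : R) (r : nat) : R :=
  (\sum_(1 <= s < r.+1) batch_size N k L1 s / k%:R) /
  (\sum_(1 <= s < r.+1) batch_size N k L1 s * round_settle N k s).

Definition rate_closed (N k : nat) : R :=
  (k%:R - N%:R * (1 - (1 - (N%:R)^-1) ^+ k))^-1.

End KIC.

(* Main.v *)
Require Import Defs.
From HB Require Import structures.
From mathcomp Require Import all_boot all_order all_algebra.
From mathcomp Require Import all_classical all_reals all_analysis.
From mathcomp Require Import ring lra zify.
Import Order.TTheory GRing.Theory Num.Theory.
Local Open Scope ring_scope.

Import numFieldNormedType.Exports.

Section S.
Variable R : realType.
Variables N k : nat.

Lemma sum_q (pi : cdist R N) :
  \sum_(c : {ffun 'I_k -> 'I_N}) query_prob R N k pi c = (\sum_x pi x) ^+ k.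
Proof.
rewrite /query_prob -(bigA_distr_bigA (fun (j : 'I_k) x => pi x)) /=.
by rewrite prodr_const card_ord.
Qed.

Lemma term_notin (pi : cdist R N) i (c : {ffun 'I_k -> 'I_N}) :
  query_prob R N k pi c * (i \notin [set c j | j in 'I_k])%:R =
  \prod_(j < k) (pi (c j) * (c j != i)%:R).
Proof.
rewrite /query_prob big_split /=; congr (_ * _).
have [/imsetP [j0 _ ->]| hn] := boolP (i \in [set c j | j in 'I_k]).
  by rewrite (bigD1 j0) //= eqxx mul0r.
rewrite big1 // => j _.
case: eqP => // e; exfalso; move/negP: hn; apply; apply/imsetP.
by exists j.
Qed.

Lemma sum_q_notin (pi : cdist R N) i :
  \sum_(c : {ffun 'I_k -> 'I_N}) query_prob R N k pi c *
      (i \notin [set c j | j in 'I_k])%:R = (\sum_x pi x - pi i) ^+ k.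
Proof.
rewrite (eq_bigr _ (fun c _ => term_notin pi i c)).
rewrite -(bigA_distr_bigA (fun (j : 'I_k) x => pi x * (x != i)%:R)) /=.
rewrite prodr_const card_ord; congr (_ ^+ _).
rewrite (bigD1 i) //= eqxx mulr0 add0r [X in _ = X - _](bigD1 i) //=.
rewrite addrAC subrr add0r; apply: eq_bigr => j hj; by rewrite hj mulr1.
Qed.

Lemma nsettled_R (c : {ffun 'I_k -> 'I_N}) :
  (n_settled N k c)%:R = k%:R - \sum_(i < N) (1 - (i \notin [set c j | j in 'I_k])%:R) :> R.
Proof.
rewrite /n_settled natrB; last by have := leq_imset_card c 'I_k; rewrite card_ord.
congr (_ - _); rewrite -sum1_card natr_sum big_mkcond /=.
by apply: eq_bigr => i _; case: ifP => _; rewrite ?subr0 ?subrr.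
Qed.
Lemma settle_gen (pi : cdist R N) : \sum_x pi x = 1 ->
  settle_prob R N k pi = (k%:R - \sum_(i < N) (1 - (1 - pi i) ^+ k)) / k%:R.
Proof.
move=> h1; rewrite /settle_prob; congr (_ / _).
transitivity (\sum_(c : {ffun 'I_k -> 'I_N}) (query_prob R N k pi c * k%:R -
   \sum_(i < N) (query_prob R N k pi c - query_prob R N k pi c *
      (i \notin [set c j | j in 'I_k])%:R))).
  apply: eq_bigr => c _; rewrite nsettled_R mulrBr mulr_sumr; congr (_ - _).
  by apply: eq_bigr => i _; rewrite mulrBr mulr1.
rewrite sumrB -mulr_suml sum_q h1 expr1n mul1r; congr (_ - _).
rewrite exchange_big /=; apply: eq_bigr => i _.
by rewrite sumrB sum_q sum_q_notin h1 expr1n.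
Qed.

Hypothesis hN : (1 <= N)%N.
Hypothesis hk : (2 <= k)%N.

Let a := (1 - (N%:R : R)^-1) ^+ k.

Lemma Nne0 : (N%:R : R) != 0. Proof. by rewrite pnatr_eq0 -lt0n. Qed.
Lemma kne0 : (k%:R : R) != 0. Proof. by rewrite pnatr_eq0 -lt0n; case: k hk. Qed.

Lemma b_ge0 : 0 <= 1 - (N%:R : R)^-1.
Proof. by rewrite subr_ge0 invf_le1 // ?ler1n // ltr0n. Qed.
Lemma b_lt1 : 1 - (N%:R : R)^-1 < 1.
Proof. by rewrite ltrBlDr ltrDl invr_gt0 ltr0n. Qed.
Lemma a_ge0 : 0 <= a. Proof. exact: exprn_ge0 b_ge0. Qed.
Lemma a_lt1 : a < 1.
Proof. by rewrite /a exprn_ilt1 ?b_ge0 ?b_lt1 //; case: k hk. Qed.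

Lemma settle_unif (pi : cdist R N) : (forall i, pi i = N%:R^-1) ->
  settle_prob R N k pi = 1 - N%:R / k%:R * (1 - a).
Proof.
move=> hpi; rewrite settle_gen.
  rewrite (eq_bigr (fun _ => 1 - a)); last by move=> i _; rewrite hpi.
  rewrite sumr_const card_ord -[(1 - a) *+ N]mulr_natl /a.
  by field; rewrite kne0.
rewrite (eq_bigr (fun _ => N%:R^-1)); last by move=> i _; rewrite hpi.
by rewrite sumr_const card_ord -[_ *+ N]mulr_natr mulVf // Nne0.
Qed.

Lemma next_unif (pi : cdist R N) : (forall i, pi i = N%:R^-1) ->
  forall i, next_dist R N k pi i = N%:R^-1.
Proof.
move=> hpi i; rewrite /next_dist hpi.
rewrite (eq_bigr (fun _ => a)); last by move=> j _; rewrite hpi.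
rewrite sumr_const card_ord -[a *+ N]mulr_natl.
have h : 1 - a != 0 by rewrite subr_eq0 eq_sym lt_eqF // a_lt1.
move: h; rewrite /a => h; field.
by rewrite Nne0 -{1}[N%:R]mulr1 -mulrBr mulf_neq0 // Nne0.
Qed.

Lemma round_unif r i : round_dist R N k r i = N%:R^-1.
Proof.
rewrite /round_dist; elim: r.-1 i => [|n IH] i; first by [].
by rewrite iterS; apply: next_unif.
Qed.

Lemma round_settle_eq s :
  round_settle R N k s = 1 - N%:R / k%:R * (1 - (1 - (N%:R)^-1) ^+ k).
Proof. exact: settle_unif (round_unif s). Qed.

Lemma rate_round_eq r : rate_round R N k r = rate_closed R N k.
Proof.
rewrite /rate_round round_settle_eq /rate_closed; congr (_^-1).
by field; rewrite kne0.
Qed.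

Lemma rate_cum_eq L1 r : 0 < L1 -> (1 <= r)%N -> rate_cum R N k L1 r = rate_closed R N k.
Proof.
move=> hL hr.
set p : R := 1 - N%:R / k%:R * (1 - (1 - (N%:R)^-1) ^+ k).
have hp : 0 <= 1 - p.
  rewrite /p opprB addrC subrK mulr_ge0 ?divr_ge0 ?ler0n // subr_ge0.
  exact: ltW a_lt1.
have hB s : 0 <= batch_size R N k L1 s.
  rewrite /batch_size; apply: mulr_ge0; [exact: ltW | apply: prodr_ge0 => t _; by rewrite round_settle_eq].
set S := \sum_(1 <= s < r.+1) batch_size R N k L1 s.
have hS : 0 < S.
  rewrite /S big_ltn // {1}/batch_size big_geq // mulr1.
  by rewrite ltr_wpDr // sumr_ge0.
rewrite /rate_cum -mulr_suml.
rewrite [X in _ / X](eq_bigr (fun s => batch_size R N k L1 s * p)); last by move=> s _; rewrite round_settle_eq.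
rewrite -mulr_suml -/S -(rate_round_eq r) /rate_round round_settle_eq -/p.
have hS0 : S != 0 by rewrite gt_eqF.
by rewrite !invfM mulrA -(mulrA S) (mulrC k%:R^-1) mulrA mulfV // mul1r.
Qed.
End S.
Local Open Scope classical_set_scope.
Section Asym.
Variable R : realType.

Lemma Q_eq k' N : (1 <= N)%N ->
  (N%:R : R) * (k'.+2%:R - N%:R * (1 - (1 - N%:R^-1) ^+ k'.+2)) =
  \sum_(i < k'.+1) (- N%:R^-1) ^+ i * ('C(k'.+2, i.+2))%:R.
Proof.
move=> hN; set x : R := N%:R^-1.
have hx : N%:R * x = 1 by rewrite mulfV // pnatr_eq0 -lt0n.
rewrite exprDn big_ord_recl big_ord_recl /bump /=.
rewrite !expr1n !mul1r expr0 bin0 expr1 bin1.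
set S' := \sum_(i < k'.+1) _.
have key : N%:R * N%:R * S' =
    \sum_(i < k'.+1) (- x) ^+ i * ('C(k'.+2, i.+2))%:R.
  rewrite /S' mulr_sumr; apply: eq_bigr => i _.
  have -> : bump 0 (bump 0 i) = i.+2 by [].
  rewrite expr1n mul1r -[_ *+ 'C(_, _)]mulr_natr mulrA; congr (_ * _).
  rewrite !exprS mulrA mulrA mulrNN.
  have -> : N%:R * N%:R * (x * x) * (- x) ^+ i = (N%:R * x) * (N%:R * x) * (- x) ^+ i :> R by ring.
  by rewrite hx !mul1r.
rewrite -key.
transitivity (N%:R * N%:R * S' + k'.+2%:R * N%:R * (1 - N%:R * x)); first by ring.
by rewrite hx subrr mulr0 addr0.
Qed.


Lemma cvg_pow (u : nat -> R) (l : R) n : u @ \oo --> l -> (fun N => u N ^+ n) @ \oo --> l ^+ n.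
Proof.
move=> h; elim: n => [|n IH]; first exact: cvg_cst.
have -> : (fun N => u N ^+ n.+1) = (fun N => u N * u N ^+ n).
  by apply: funext => N; rewrite exprS.
rewrite exprS; exact: (cvgM h IH).
Qed.

Lemma cvg_poly (u : nat -> R) (l : R) (b : nat -> R) n : u @ \oo --> l ->
  (fun N => \sum_(i < n) u N ^+ i * b i) @ \oo --> \sum_(i < n) l ^+ i * b i.
Proof.
move=> h; elim: n => [|n IH].
  rewrite big_ord0.
  have -> : (fun N => \sum_(i < 0) u N ^+ i * b i) = (fun=> 0).
    by apply: funext => N; rewrite big_ord0.
  exact: cvg_cst.
rewrite big_ord_recr /=.
have -> : (fun N => \sum_(i < n.+1) u N ^+ i * b i) =
   (fun N => \sum_(i < n) u N ^+ i * b i + u N ^+ n * b n).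
  by apply: funext => N; rewrite big_ord_recr.
apply: cvgD; first exact: IH.
apply: cvgM; [exact: cvg_pow | exact: cvg_cst].
Qed.

Lemma cvg_invn : (fun N : nat => (N%:R : R)^-1) @ \oo --> 0.
Proof. by rewrite -cvg_shiftS; exact: cvg_harmonic. Qed.

Lemma bin2_mul n : ('C(n, 2) * 2 = n * (n - 1))%N.
Proof.
elim: n => [|n IH] //; rewrite binS bin1; nia.
Qed.

Lemma asym k' : (fun N : nat => rate_closed R N k'.+2 /
   (2 * N%:R / (k'.+2%:R * (k'.+2%:R - 1)))) @ \oo --> (1 : R).
Proof.
set k := k'.+2.
set c : R := k%:R * (k%:R - 1) / 2.
set C : R := ('C(k, 2))%:R.
have cC : c = C.
  have h : C * 2 = k%:R * (k%:R - 1).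
    by rewrite /C -[2]/(2%:R) -natrM bin2_mul natrM natrB.
  by rewrite /c -h; field.
have C0 : C != 0 by rewrite /C pnatr_eq0 -lt0n bin_gt0.
have hQ : (fun N : nat => (N%:R : R) * (k%:R - N%:R * (1 - (1 - N%:R^-1) ^+ k)))
    @ \oo --> C.
  have hu : (fun N : nat => - (N%:R : R)^-1) @ \oo --> 0.
    by rewrite -oppr0; apply: cvgN; exact: cvg_invn.
  have := cvg_poly _ _ (fun i => ('C(k, i.+2))%:R) k'.+1 hu.
  rewrite big_ord_recl expr0 mul1r big1 ?addr0; last first.
    by move=> i _; rewrite expr0n /= mul0r.
  apply: cvg_trans; apply: near_eq_cvg; near=> N.
  rewrite Q_eq //; near: N; exists 1%N => //.
have -> : (fun N : nat => rate_closed R N k / (2 * N%:R / (k%:R * (k%:R - 1)))) =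
  (fun N : nat => c * ((N%:R : R) * (k%:R - N%:R * (1 - (1 - N%:R^-1) ^+ k)))^-1).
  apply: funext => N.
  rewrite /rate_closed invf_div !invfM /c; ring.
suff : (fun N : nat => c * ((N%:R : R) * (k%:R - N%:R * (1 - (1 - N%:R^-1) ^+ k)))^-1)
   @ \oo --> c * C^-1 by rewrite cC mulfV.
have hV : (fun N : nat => ((N%:R : R) * (k%:R - N%:R * (1 - (1 - N%:R^-1) ^+ k)))^-1)
    @ \oo --> C^-1 by apply: cvgV.
exact: (cvgM (cvg_cst c) hV).
Unshelve. all: by end_near.
Qed.
End Asym.

Local Open Scope classical_set_scope.

Theorem corollary3 (R : realType) (k : nat) (hk : (2 <= k)%N) :
  (forall (N : nat), (1 <= N)%N -> forall (L1 : R), 0 < L1 ->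
   forall (r : nat), (1 <= r)%N ->
     (forall i : 'I_N, round_dist R N k r i = (N%:R)^-1) /\
     round_settle R N k r = 1 - N%:R / k%:R * (1 - (1 - (N%:R)^-1) ^+ k) /\
     rate_round R N k r = rate_closed R N k /\
     rate_cum R N k L1 r = rate_closed R N k) /\
  ((fun N : nat => rate_closed R N k / (2 * N%:R / (k%:R * (k%:R - 1))))
     @ \oo --> (1 : R)).
Proof.
split.
  move=> N hN L1 hL r hr; split; first exact: round_unif.
  split; first exact: round_settle_eq.
  split; first exact: rate_round_eq.
  exact: rate_cum_eq.
case: k hk => [|[|k']] // _; exact: asym.
Qed.
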